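(* Let $\mathcal{X}$ be a context space, $\mathcal{A}$ a finite arm set, $\hat f:\mathcal{X}\times\mathcal{A}\to[0,1]$, $\hat\pi_{\text{con}}:\mathcal{X}\to\mathcal{A}$, $\hat U_{\text{con}}>0$, $\hat g:\mathcal{X}\to 2^{\mathcal{A}}$, $\beta_{\max}\in(0,1)$ and $\eta\ge 1$. For $\zeta>0$ let $C(x,\zeta):=\{a\in\hat g(x):\hat f(x,\hat\pi_{\text{con}}(x))-\hat f(x,a)\le\hat U_{\text{con}}/\zeta\}$ (assumed nonempty), let $\mathrm{Unif}_\zeta(\cdot\mid x)$ be the uniform distribution on $C(x,\zeta)$, and define $$p(a\mid x):=(1-\beta_{\max})\mathrm{Unif}_{\beta_{\max}/\eta}(a\mid x)+\int_0^{\beta_{\max}}\mathrm{Unif}_{\beta/\eta}(a\mid x)\,d\beta .$$ Then for all $x\in\mathcal{X}$ and $a\in\mathcal{A}$: if $a\in C(x,\beta_{\max}/\eta)$, then $p(a\mid x)\ge\frac{1-\beta_{\max}}{|C(x,\beta_{\max}/\eta)|}+\frac{\beta_{\max}}{|\hat g(x)|}\ge\frac{1}{|\hat g(x)|}$; if $a\notin C(x,\beta_{\max}/\eta)$ and $a\in\hat g(x)$, then $p(a\mid x)\ge\frac{\eta}{|\hat g(x)|}\frac{\hat U_{\text{con}}}{\hat f(x,\hat\pi_{\text{con}}(x))-\hat f(x,a)}\ge\frac{\eta\hat U_{\text{con}}}{|\hat g(x)|}$; and otherwise $p(a\mid x)\ge 0$. *)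

(* Defs.v *)
From HB Require Import structures.
From mathcomp Require Import all_boot all_order all_algebra.
From mathcomp Require Import all_classical all_reals all_analysis.
Set Implicit Arguments. Unset Strict Implicit. Unset Printing Implicit Defensive.
Import Order.TTheory GRing.Theory Num.Theory.
Import numFieldNormedType.Exports.
Local Open Scope classical_set_scope.
Local Open Scope ring_scope.

Definition Cset (X : Type) (A : finType) (R : realType)
  (fhat : X -> A -> R) (pihat : X -> A) (Uhat : R) (ghat : X -> {set A})
  (x : X) (zeta : R) : {set A} :=
  [set a in ghat x | fhat x (pihat x) - fhat x a <= Uhat / zeta].

Definition unif (X : Type) (A : finType) (R : realType)
  (fhat : X -> A -> R) (pihat : X -> A) (Uhat : R) (ghat : X -> {set A})
  (zeta : R) (x : X) (a : A) : R :=
  if a \in Cset fhat pihat Uhat ghat x zeta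
  then (#|Cset fhat pihat Uhat ghat x zeta|%:R)^-1 else 0.

Definition ppol (X : Type) (A : finType) (R : realType)
  (fhat : X -> A -> R) (pihat : X -> A) (Uhat : R) (ghat : X -> {set A})
  (bmax eta : R) (x : X) (a : A) : R :=
  (1 - bmax) * unif fhat pihat Uhat ghat (bmax / eta) x a
  + fine (\int[@lebesgue_measure R]_(b in `[0%R, bmax]%classic)
            ((unif fhat pihat Uhat ghat (b / eta) x a)%:E)).

(* Main.v *)
From HB Require Import structures.
From mathcomp Require Import all_boot all_order all_algebra.
From mathcomp Require Import all_classical all_reals all_analysis.
From mathcomp Require Import ring lra.
Import Order.TTheory GRing.Theory Num.Theory.
Import numFieldNormedType.Exports.
Local Open Scope classical_set_scope.
Local Open Scope ring_scope.
Require Import Defs.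

Lemma int_mono d (T : measurableType d) (R : realType)
  (mu : {measure set T -> \bar R}) (D : set T) (f g : T -> \bar R) :
  (forall x, D x -> (0 <= f x)%E) -> (forall x, D x -> (f x <= g x)%E) ->
  (\int[mu]_(x in D) f x <= \int[mu]_(x in D) g x)%E.
Proof.
move=> f0 fg; rewrite !(integral_mkcond D).
have hf x : (0 <= (f \_ D) x)%E.
  by rewrite /patch; case: ifP => // /set_mem /f0.
have hg x : (0 <= (g \_ D) x)%E.
  rewrite /patch; case: ifP => // /set_mem Dx.
  exact: le_trans (f0 _ Dx) (fg _ Dx).
rewrite !ge0_integralTE //; apply: ereal_sup_le => _ [h /= hh <-].
exists h => //= x; apply: le_trans (hh x) _.
rewrite /patch; case: ifP => // /set_mem Dx; exact: fg.
Qed.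

Lemma int_sub d (T : measurableType d) (R : realType)
  (mu : {measure set T -> \bar R}) (D1 D2 : set T) (f : T -> \bar R) :
  D1 `<=` D2 -> (forall x, D2 x -> (0 <= f x)%E) ->
  (\int[mu]_(x in D1) f x <= \int[mu]_(x in D2) f x)%E.
Proof.
move=> s f0; rewrite (integral_mkcond D1) (integral_mkcond D2).
apply: int_mono => x _; rewrite /patch.
  by case: ifP => // /set_mem /s /f0.
case: ifP => [/set_mem /s /mem_set -> //|_].
by case: ifP => // /set_mem /f0.
Qed.

Lemma key (R : realType) (F : R -> R) (bmax c b1 : R) :
  0 < b1 -> b1 <= bmax -> 0 <= c ->
  (forall b, 0 <= b -> b <= bmax -> 0 <= F b <= 1) ->
  (forall b, 0 < b -> b <= b1 -> c <= F b) ->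
  c * b1 <= fine (\int[@lebesgue_measure R]_(b in `[0%R, bmax]%classic) (F b)%:E).
Proof.
move=> b10 b1m c0 F01 Fc.
have F0 : forall x, `[0%R, bmax]%classic x -> (0 <= (F x)%:E)%E.
  move=> x /=; rewrite in_itv /= => /andP[h1 h2].
  by rewrite lee_fin; case/andP: (F01 _ h1 h2).
have up : (\int[@lebesgue_measure R]_(b in `[0%R, bmax]%classic) (F b)%:E
           <= bmax%:E)%E.
  apply: le_trans (_ : (\int[@lebesgue_measure R]_(b in `[0%R, bmax]%classic) (cst 1%:E) b <= _)%E).
    apply: int_mono => // x /=; rewrite in_itv /= => /andP[h1 h2].
    by rewrite lee_fin; case/andP: (F01 _ h1 h2).
  rewrite integral_cst //= lebesgue_measure_itv /= lte_fin.
  rewrite (lt_le_trans b10 b1m) mul1e sube0 //.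
have lo : ((c * b1)%:E <= \int[@lebesgue_measure R]_(b in `[0%R, bmax]%classic) (F b)%:E)%E.
  apply: le_trans (_ : (\int[@lebesgue_measure R]_(b in `]0%R, b1]%classic) (F b)%:E <= _)%E); last first.
    apply: int_sub => // x /=; rewrite !in_itv /= => /andP[h1 h2].
    by rewrite (ltW h1) (le_trans h2 b1m).
  apply: le_trans (_ : (\int[@lebesgue_measure R]_(b in `]0%R, b1]%classic) (cst c%:E) b <= _)%E).
    rewrite integral_cst //= lebesgue_measure_itv /= lte_fin b10 sube0 //.
  apply: int_mono => x /=; rewrite in_itv /= => /andP[h1 h2]; rewrite lee_fin //.
  exact: Fc.
have I0 := le_trans (lee_tofin (mulr_ge0 c0 (ltW b10))) lo.
have fin : (\int[@lebesgue_measure R]_(b in `[0%R, bmax]%classic) (F b)%:E)%E \is a fin_num.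
  by rewrite ge0_fin_numE // (le_lt_trans up) // ltry.
by rewrite -lee_fin fineK.
Qed.

Lemma div_eta (R : realType) (U b eta : R) : U / (b / eta) = U * eta / b.
Proof. by rewrite invf_div mulrA. Qed.

Theorem lemmaH4 (X : Type) (A : finType) (R : realType)
  (fhat : X -> A -> R) (pihat : X -> A) (Uhat : R) (ghat : X -> {set A})
  (bmax eta : R)
  (hf : forall x a, 0 <= fhat x a <= 1)
  (hU : 0 < Uhat) (hb0 : 0 < bmax) (hb1 : bmax < 1) (heta : 1 <= eta)
  (hC : forall x zeta, 0 < zeta -> Cset fhat pihat Uhat ghat x zeta != finset.set0) :
  forall (x : X) (a : A),
    let C := Cset fhat pihat Uhat ghat x (bmax / eta) in
    let p := ppol fhat pihat Uhat ghat bmax eta x a in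
    (a \in C ->
       (1 - bmax) / #|C|%:R + bmax / #|ghat x|%:R <= p /\
       1 / #|ghat x|%:R <= (1 - bmax) / #|C|%:R + bmax / #|ghat x|%:R) /\
    (a \notin C -> a \in ghat x ->
       eta / #|ghat x|%:R * (Uhat / (fhat x (pihat x) - fhat x a)) <= p /\
       eta * Uhat / #|ghat x|%:R
         <= eta / #|ghat x|%:R * (Uhat / (fhat x (pihat x) - fhat x a))) /\
    (a \notin C -> a \notin ghat x -> 0 <= p).
Proof.
move=> x a C p.
set F := fun b => unif fhat pihat Uhat ghat (b / eta) x a.
set d := fhat x (pihat x) - fhat x a.
have eta0 : 0 < eta by apply: lt_le_trans heta.
have F01 : forall b, 0 <= b -> b <= bmax -> 0 <= F b <= 1.
  move=> b _ _; rewrite /F /unif; case: ifP => [aC|]; last by rewrite lexx ler01.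
  have cp : (0 < #|Cset fhat pihat Uhat ghat x (b / eta)|)%N by apply/card_gt0P; exists a.
  by rewrite invr_ge0 ler0n /= invf_le1 ?ltr0n // ler1n.
have Flo : forall b, a \in ghat x -> d <= Uhat / (b / eta) -> #|ghat x|%:R^-1 <= F b.
  move=> b ag hd; rewrite /F /unif.
  have aC : a \in Cset fhat pihat Uhat ghat x (b / eta) by rewrite inE ag hd.
  rewrite aC.
  have cp : (0 < #|Cset fhat pihat Uhat ghat x (b / eta)|)%N by apply/card_gt0P; exists a.
  have cg : (#|Cset fhat pihat Uhat ghat x (b / eta)| <= #|ghat x|)%N.
    by apply: subset_leq_card; apply/fintype.subsetP => y; rewrite inE => /andP[].
  rewrite lef_pV2 ?posrE ?ltr0n ?ler_nat //; exact: leq_trans cp cg.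
have pE : p = (1 - bmax) * unif fhat pihat Uhat ghat (bmax / eta) x a +
   fine (\int[@lebesgue_measure R]_(b in `[0%R, bmax]%classic) (F b)%:E)%E by [].
split; [|split].
- move=> aC.
  have ag : a \in ghat x by move: aC; rewrite inE => /andP[].
  have cp : (0 < #|C|)%N by apply/card_gt0P; exists a.
  have cg : (#|C| <= #|ghat x|)%N by apply: subset_leq_card; apply/fintype.subsetP => y; rewrite inE => /andP[].
  have gp : (0 < #|ghat x|)%N by apply: leq_trans cp cg.
  have ineq : #|ghat x|%:R^-1 <= (#|C|%:R^-1 : R).
    by rewrite lef_pV2 ?posrE ?ltr0n // ler_nat.
  split.
    rewrite pE /unif -/C aC; apply: lerD; first by rewrite mulrC.
    rewrite mulrC; apply: key; [done|done|by rewrite invr_ge0 ler0n|exact: F01|].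
    move=> b b0 bb; apply: Flo => //.
    move: aC; rewrite inE => /andP[_ h]; apply: le_trans h _.
    rewrite !div_eta ler_wpM2l ?mulr_ge0 ?(ltW hU) ?(ltW eta0) //.
    by rewrite lef_pV2 ?posrE.
  rewrite !div1r.
  have h1 : 0 <= 1 - bmax by rewrite subr_ge0 ltW.
  have := ler_wpM2l h1 ineq; lra.
- move=> aC ag.
  have dlt : Uhat / (bmax / eta) < d.
    by move: aC; rewrite inE ag /= ltNge.
  have up0 : 0 < Uhat / (bmax / eta) by rewrite divr_gt0 // divr_gt0.
  have d0 : 0 < d by apply: lt_trans dlt.
  have gp : (0 < #|ghat x|)%N by apply/card_gt0P; exists a.
  have d1 : d <= 1.
    rewrite /d; case/andP: (hf x (pihat x)) => _ h1; case/andP: (hf x a) => h2 _; lra.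
  split.
    rewrite pE /unif -/C (negbTE aC) mulr0 add0r.
    have -> : eta / #|ghat x|%:R * (Uhat / d) = #|ghat x|%:R^-1 * (eta * Uhat / d).
      by rewrite !mulrA (mulrC eta) -!mulrA.
    apply: key.
    + by rewrite divr_gt0 // mulr_gt0.
    + move: dlt; rewrite div_eta ler_pdivrMr // ltr_pdivrMr // => h; lra.
    + by rewrite invr_ge0 ler0n.
    + exact: F01.
    move=> b b0 bb; apply: Flo => //.
    move: bb; rewrite div_eta ler_pdivlMr // ler_pdivlMr // => h; lra.
  rewrite mulrAC ler_wpM2l ?divr_ge0 ?ler0n ?(ltW eta0) //.
  by rewrite ler_pdivlMr // ler_piMr // ltW.
- move=> aC _; rewrite pE /unif -/C (negbTE aC) mulr0 add0r.
  apply: fine_ge0; apply: integral_ge0 => b /=; rewrite in_itv /= => /andP[h1 h2].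
  by rewrite lee_fin; case/andP: (F01 _ h1 h2).
Qed.
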